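(* Fix a distribution of $(X,Y)$ on $\mathcal{X}\times\{0,1\}$ with expectation $\mathbb{E}$, let $\mathcal{L}(F,y)=-[y\log\mu(F)+(1-y)\log(1-\mu(F))]$ be the log loss with $\mu(F)=1/(1+e^{-F})$, and let $\mathcal{H}$ be a set of group membership functions $h:\mathcal{X}\to\{0,1\}$. Let $F_T,F_{T+1}:\mathcal{X}\to\mathbb{R}$ be logit predictors, $f_T=\mu\circ F_T$, and let $\mathcal{W}$ be a class of weak learners $\phi:\mathcal{X}\times[0,1]\to\mathbb{R}$ such that for every $h\in\mathcal{H}$ and $g\in\mathcal{G}$ the function $(x,v)\mapsto h(x)g(v)$ belongs to $\mathcal{W}$. Define $\mathcal{L}^*_T=\inf\big\{\mathbb{E}[\mathcal{L}(F_T(X)+\sum_{k=1}^K w_k\phi_k(X,f_T(X)),Y)] : K\in\mathbb{N},\ w\in\mathbb{R}^K,\ \phi_1,\dots,\phi_K\in\mathcal{W}\big\}$, $\epsilon_T=\mathbb{E}[\mathcal{L}(F_{T+1}(X),Y)]-\mathcal{L}^*_T$, and $$C_T^2=\max_{h\in\mathcal{H},\,g\in\mathcal{G}}\frac{\mathbb{E}[g(f_T(X))\mid h(X)=1]}{\mathbb{E}[f_T(X)(1-f_T(X))\mid h(X)=1]}.$$ Then $f_T$ is $\alpha$-multicalibrated with respect to $\mathcal{H}$ for $$\alpha=\frac{2}{\sqrt3}\,C_T\sqrt{2\,\mathbb{E}[|F_{T+1}(X)-F_T(X)|]+\tfrac18\,\mathbb{E}[(F_{T+1}(X)-F_T(X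))^2]+\epsilon_T}.$$
   Context: $\mathcal{G}$ is the set of interval membership functions $g:[0,1]\to\{0,1\}$, $g(v)=\mathbb{1}_I(v)$ for an interval $I\subseteq[0,1]$. A probabilistic predictor $f$ is $\alpha$-multicalibrated with respect to $\mathcal{H}$ if $\big|\mathbb{E}[h(X)g(f(X))(Y-f(X))]\big|\le\alpha\sqrt{\mathbb{E}[h(X)f(X)(1-f(X))]}$ for all $h\in\mathcal{H}$, $g\in\mathcal{G}$. In the paper, $F_{T+1}$ is obtained from $F_T$ by gradient boosting with weak learners in $\mathcal{W}$ (regression trees on the features augmented with $f_T(x)$), and $\mathcal{L}^*_T$ is the loss of the optimal combination of weak learners added to $F_T$. *)

(* Defs.v *)
From HB Require Import structures.
From mathcomp Require Import all_boot all_order all_algebra.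
From mathcomp Require Import all_classical all_reals all_analysis.
Set Implicit Arguments. Unset Strict Implicit. Unset Printing Implicit Defensive.
Import Order.TTheory GRing.Theory Num.Theory.
Local Open Scope classical_set_scope.
Local Open Scope ring_scope.

Definition sigmoid {R : realType} (F : R) : R := 1 / (1 + expR (- F)).

Definition logloss {R : realType} (F y : R) : R :=
  - (y * ln (sigmoid F) + (1 - y) * ln (1 - sigmoid F)).

Definition Ex {d} {Omega : measurableType d} {R : realType}
  (P : probability Omega R) (Z : Omega -> R) : R :=
  fine (\int[P]_w (Z w)%:E)%E.

Definition condEx {d} {Omega : measurableType d} {R : realType}
  (P : probability Omega R) (Z : Omega -> R) (A : set Omega) : R :=
  Ex P (fun w => Z w * \1_A w) / fine (P A).

Definition interval_membership {R : realType} (g : R -> R) : Prop :=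
  exists I : interval R,
    {subset I <= Interval (BLeft (0:R)) (BRight (1:R))} /\
    forall v, g v = (if v \in I then 1 else 0).

Definition multicalibrated {d d'} {Omega : measurableType d}
  {Xt : measurableType d'} {R : realType} (P : probability Omega R)
  (X : Omega -> Xt) (Y : Omega -> R) (H : set (Xt -> R)) (f : Xt -> R)
  (alpha : R) : Prop :=
  forall h g, H h -> interval_membership g ->
    `| Ex P (fun w => h (X w) * g (f (X w)) * (Y w - f (X w))) |
      <= alpha * Num.sqrt (Ex P (fun w => h (X w) * f (X w) * (1 - f (X w)))).

Definition Lstar {d d'} {Omega : measurableType d}
  {Xt : measurableType d'} {R : realType} (P : probability Omega R)
  (X : Omega -> Xt) (Y : Omega -> R) (W : set (Xt -> R -> R))
  (FT : Xt -> R) : \bar R :=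
  ereal_inf [set r | exists (K : nat) (wt : 'I_K -> R)
                            (phi : 'I_K -> (Xt -> R -> R)),
     (forall k, W (phi k)) /\
     r = (\int[P]_w (logloss (FT (X w) +
            \sum_(k < K) wt k * phi k (X w) (sigmoid (FT (X w)))) (Y w))%:E)%E].

Definition CT2_ratios {d d'} {Omega : measurableType d}
  {Xt : measurableType d'} {R : realType} (P : probability Omega R)
  (X : Omega -> Xt) (H : set (Xt -> R)) (f : Xt -> R) : set R :=
  [set r | exists (h : Xt -> R) (g : R -> R), H h /\ interval_membership g /\
     (0%E < P [set w | h (X w) = 1%R])%E /\
     r = condEx P (fun w => g (f (X w))) [set w | h (X w) = 1] /
         condEx P (fun w => f (X w) * (1 - f (X w))) [set w | h (X w) = 1]].

(* Main.v *)
Require Import Defs.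
From HB Require Import structures.
From mathcomp Require Import all_boot all_order all_algebra.
From mathcomp Require Import all_classical all_reals all_analysis.
From mathcomp Require Import ring lra measurable_realfun.
Import Order.TTheory GRing.Theory Num.Theory numFieldNormedType.Exports.
Local Open Scope classical_set_scope.
Local Open Scope ring_scope.

Section Calc.
Context {R : realType}.
Definition sp (x : R) : R := ln (1 + expR x).

Lemma sigmoidE (x : R) : sigmoid x = (1 + expR (- x))^-1.
Proof. by rewrite /sigmoid div1r. Qed.

Lemma sigmoid_gt0 (x : R) : 0 < sigmoid x.
Proof. by rewrite sigmoidE invr_gt0 addr_gt0 // expR_gt0. Qed.

Lemma sigmoid_lt1 (x : R) : sigmoid x < 1.
Proof. rewrite sigmoidE invf_lt1 ?addr_gt0 ?expR_gt0 //. by rewrite ltrDl expR_gt0. Qed.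

Lemma is_derive_sp (x : R) : is_derive x 1 sp (sigmoid x).
Proof.
have h1 : 0 < 1 + expR x by rewrite addr_gt0 // expR_gt0.
have -> : sp = (@ln R) \o (fun y => 1 + expR y) by [].
apply: is_derive_eq.
  apply: is_derive1_comp; first exact: is_derive1_ln.
rewrite add0r mul1r sigmoidE expRN.
have e0 : 0 < expR x by rewrite expR_gt0.
field. rewrite gt_eqF ?addr_gt0 ?invr_gt0 //= andbT.
Qed.

Lemma is_derive_sigmoid (x : R) :
  is_derive x 1 sigmoid (sigmoid x * (1 - sigmoid x)).
Proof.
have -> : @sigmoid R = (fun y => (1 + expR (- y))^-1).
  by apply/funext => y; rewrite sigmoidE.
have e0 : 0 < expR (- x) by rewrite expR_gt0.
have hf : is_derive x (1:R) (cst (1:R) + (expR \o -%R)) (0 + (expR (- x) * (-1))).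
  apply: is_deriveD; apply: is_derive1_comp.
have hn : (cst (1:R) + (expR \o -%R)) x != 0 by rewrite /= gt_eqF // addr_gt0.
have := is_deriveV hn hf.
move=> H; apply: (is_derive_eq H).
have -> : (cst (1:R) + (expR \o -%R)) x = 1 + expR (-x) by [].
rewrite -[_ *: _]/(_ * _).
field. rewrite gt_eqF ?addr_gt0 //.
Qed.

Lemma sig_var_le (x : R) : sigmoid x * (1 - sigmoid x) <= 4^-1.
Proof. set p := sigmoid x. rewrite -subr_ge0. have -> : 4^-1 - p * (1 - p) = (p - 2^-1)^+2 :> R by field.
exact: sqr_ge0. Qed.

Lemma cont_of_der (f df : R -> R) (u v : R) :
  (forall x : R, is_derive x (1:R) f (df x)) -> {within `[u, v], continuous f}.
Proof.
move=> H; apply/continuous_subspaceT=> r.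
have hd : derivable f r 1 by case: (H r). move/derivable1_diffP/differentiable_continuous: hd. exact.
Qed.

Lemma sig_lip (u v : R) : u <= v -> sigmoid v - sigmoid u <= (v - u) / 4.
Proof.
move=> uv.
have [c _ ->] := @MVT_segment R sigmoid (fun x => sigmoid x * (1 - sigmoid x)) u v uv
  (fun x _ => is_derive_sigmoid x) (@cont_of_der _ _ u v is_derive_sigmoid).
rewrite [X in _ <= X]mulrC; apply: ler_wpM2r; first by rewrite subr_ge0.
exact: sig_var_le.
Qed.

Lemma hoeff (u t : R) : sp (t + u) <= sp u + t * sigmoid u + t ^+ 2 / 8.
Proof.
pose G := (sp \o shift u) - (sigmoid u) \*: id - (8:R)^-1 \*: (id ^+ 2).
have hG : forall s : R, is_derive s (1:R) G (sigmoid (s + u) - sigmoid u - s / 4).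
  move=> s.
  have h1 := @is_derive1_comp _ sp (shift u) s _ _ (is_derive_sp (s + u)) (is_derive_shift s 1 u).
  have h2 : is_derive s (1:R) ((sigmoid u) \*: id) (sigmoid u *: 1).
    exact: is_deriveZ.
  have h3 := is_deriveZ ((8:R)^-1) (is_deriveX 2 (is_derive_id s (1:R))).
  have h4 := (is_deriveB (is_deriveB h1 h2) h3).
  apply: (is_derive_eq h4).
  rewrite !scaler1 -[_ *: _]/(_ * _) /=. by field.
have GE : forall r, G r = sp (r + u) - r * sigmoid u - r ^+ 2 / 8.
  move=> r; have -> : G r = sp (r + u) - sigmoid u * r - 8^-1 * (r ^+ 2) by [].
  by field.
have G0 : G 0 = sp u by rewrite GE add0r mul0r expr0n /= mul0r !subr0.
suff : G t <= G 0 by rewrite GE G0; lra.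
have [t0|t0] := leP 0 t.
  have [c] := MVT_segment t0 (fun x _ => hG x) (@cont_of_der _ _ 0 t hG).
  rewrite in_itv /= => /andP[c0 ct] E.
  rewrite -subr_le0 E subr0; apply: mulr_le0_ge0 => //.
  have uc : u <= c + u by lra.
  have := @sig_lip u (c + u) uc. lra.
have [c] := MVT_segment (ltW t0) (fun x _ => hG x) (@cont_of_der _ _ t 0 hG).
rewrite in_itv /= => /andP[tc c0] E.
rewrite -subr_ge0 E; apply: mulr_ge0; last by rewrite sub0r oppr_ge0 ltW.
have uc : c + u <= u by lra.
have := @sig_lip (c + u) u uc. lra.
Qed.

Lemma sigmoidN (x : R) : sigmoid (- x) = 1 - sigmoid x.
Proof.
rewrite !sigmoidE opprK expRN.
have e0 : 0 < expR x by rewrite expR_gt0.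
field. rewrite !gt_eqF ?addr_gt0 ?invr_gt0 //.
Qed.

Lemma ln_sigmoid (x : R) : ln (sigmoid x) = - sp (- x).
Proof.
rewrite sigmoidE lnV //; by rewrite posrE addr_gt0 // expR_gt0.
Qed.

Lemma logloss_sp (F y : R) : logloss F y = y * sp (- F) + (1 - y) * sp F.
Proof.
rewrite /logloss -sigmoidN !ln_sigmoid opprK; ring.
Qed.

Lemma sp_ge0 (x : R) : 0 <= sp x.
Proof. rewrite /sp ln_ge0 //; have := expR_gt0 x; lra. Qed.

Lemma sp_lip (a b : R) : sp a <= sp b + `|a - b|.
Proof.
have [ab|ba] := leP a b.
  have [c _ E] := MVT_segment ab (fun x _ => is_derive_sp x) (@cont_of_der _ _ a b is_derive_sp).
  have : 0 <= sp b - sp a by rewrite E mulr_ge0 ?subr_ge0 // ltW // sigmoid_gt0.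
  have := normr_ge0 (a - b). lra.
have [c _ E] := MVT_segment (ltW ba) (fun x _ => is_derive_sp x) (@cont_of_der _ _ b a is_derive_sp).
rewrite gtr0_norm ?subr_gt0 //.
have : sp a - sp b <= a - b.
  rewrite E ler_piMl ?subr_ge0 ?ltW ?sigmoid_gt0 ?sigmoid_lt1 //.
lra.
Qed.

Lemma logloss0 (F : R) : logloss F 0 = sp F.
Proof. by rewrite logloss_sp mul0r add0r subr0 mul1r. Qed.
Lemma logloss1 (F : R) : logloss F 1 = sp (- F).
Proof. by rewrite logloss_sp subrr mul0r addr0 mul1r. Qed.

Lemma logloss_ge0 (F y : R) : y = 0 \/ y = 1 -> 0 <= logloss F y.
Proof. by case=> ->; rewrite ?logloss0 ?logloss1 sp_ge0. Qed.

Lemma logloss_lip (F G y : R) : y = 0 \/ y = 1 -> logloss G y <= logloss F y + `|G - F|.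
Proof.
case=> ->; rewrite ?logloss0 ?logloss1; first exact: sp_lip.
have := sp_lip (- G) (- F).
have -> : - G - - F = - (G - F) by ring.
by rewrite normrN.
Qed.

Lemma logloss_abs (F y : R) : y = 0 \/ y = 1 -> `|logloss F y| <= `|F| + ln 2.
Proof.
move=> hy; rewrite ger0_norm ?logloss_ge0 //.
have := @logloss_lip 0 F y hy; rewrite subr0.
have -> : logloss 0 y = ln 2.
  by case: hy => ->; rewrite ?logloss0 ?logloss1 ?oppr0 /sp expR0.
lra.
Qed.

Lemma logloss_quad (F w z y : R) : y = 0 \/ y = 1 -> z = 0 \/ z = 1 ->
  logloss (F + w * z) y <= logloss F y + w * (z * (sigmoid F - y)) + w ^+ 2 * z / 8.
Proof.
move=> hy [->|->]; first by rewrite !mulr0 !mul0r !mulr0 !addr0.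
rewrite !mulr1 !mul1r.
case: hy => ->; rewrite ?logloss0 ?logloss1.
  rewrite subr0 addrC. have := hoeff F w. rewrite mulrC. lra.
have := hoeff (- F) (- w).
rewrite sigmoidN sqrrN opprD addrC => h; apply: le_trans h _.
rewrite mulrC; lra.
Qed.

Lemma cont_of_der_all (f df : R -> R) :
  (forall x : R, is_derive x (1:R) f (df x)) -> continuous f.
Proof.
move=> H r.
have hd : derivable f r 1 by case: (H r).
by move/derivable1_diffP/differentiable_continuous: hd.
Qed.

Lemma sigmoid_continuous : continuous (@sigmoid R).
Proof. exact: cont_of_der_all is_derive_sigmoid. Qed.

Lemma sp_continuous : continuous sp.
Proof. exact: cont_of_der_all is_derive_sp. Qed.
End Calc.

Lemma abs_le_of_sqr {R : realType} (a r : R) : 0 <= r -> a ^+ 2 <= r ^+ 2 -> `|a| <= r.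
Proof.
move=> r0 h; rewrite -(ger0_norm r0) -ler_sqr ?normr_ge0 //.
by rewrite real_normK ?num_real // real_normK ?num_real.
Qed.

Lemma core_alg {R : realType} (a Z V C2 D1 D2 L0 L1 Ls : R) :
  (forall w, Ls <= L0 - w * a + w ^+ 2 * Z / 8) ->
  L0 <= L1 + D1 -> `|a| <= Z -> (0 < Z -> Z <= C2 * V /\ 0 <= C2) ->
  0 <= D1 -> 0 <= D2 -> 0 <= V ->
  `|a| <= 2 / Num.sqrt 3 * Num.sqrt C2 *
     Num.sqrt (2 * D1 + 1 / 8 * D2 + (L1 - Ls)) * Num.sqrt V.
Proof.
move=> H HL aZ HC D10 D20 V0.
have Z0 : 0 <= Z by exact: le_trans aZ.
have s3 : 0 < Num.sqrt (3:R) by rewrite sqrtr_gt0; lra.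
have [Zz|Zp] := eqVneq Z 0.
  have -> : `|a| = 0 by apply: le_anti; rewrite normr_ge0 -Zz aZ.
  by apply: mulr_ge0; rewrite ?sqrtr_ge0 //; apply: mulr_ge0; rewrite ?sqrtr_ge0 //;
     apply: mulr_ge0; rewrite ?sqrtr_ge0 // divr_ge0 ?ltW //.
have Zp' : 0 < Z by rewrite lt_def Zp Z0.
have [CV C20] := HC Zp'.
have H1 := H (4 * a / Z).
have k : 2 * a ^+ 2 <= Z * (D1 + (L1 - Ls)).
  have e : L0 - 4 * a / Z * a + (4 * a / Z) ^+ 2 * Z / 8 = L0 - 2 * a^+2 / Z.
    by field; rewrite Zp.
  rewrite e in H1.
  rewrite [Z * _]mulrC -ler_pdivrMr //; lra.
have DE : 0 <= D1 + (L1 - Ls).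
  have : 0 <= 2 * a ^+ 2 by rewrite mulr_ge0 ?sqr_ge0.
  move=> h; have : 0 <= Z * (D1 + (L1 - Ls)) by lra.
  by rewrite pmulr_rge0.
set S := 2 * D1 + 1 / 8 * D2 + (L1 - Ls).
have S0 : 0 <= S by rewrite /S; lra.
have k2 : a ^+ 2 <= 4 / 3 * C2 * S * V.
  have : 2 * a ^+ 2 <= C2 * V * (D1 + (L1 - Ls)).
    apply: le_trans k _; apply: ler_wpM2r => //.
  move=> h.
  have h2 : C2 * V * (D1 + (L1 - Ls)) <= C2 * V * (8 / 3 * S).
    apply: ler_wpM2l; first exact: mulr_ge0.
    rewrite /S; lra.
  have : C2 * V * (8 / 3 * S) = 2 * (4 / 3 * C2 * S * V) by field.
  lra.
apply: abs_le_of_sqr.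
  by apply: mulr_ge0; rewrite ?sqrtr_ge0 //; apply: mulr_ge0; rewrite ?sqrtr_ge0 //;
     apply: mulr_ge0; rewrite ?sqrtr_ge0 // divr_ge0 ?ltW //.
rewrite !exprMn !sqr_sqrtr // exprVn sqr_sqrtr; last by lra.
have -> : (2:R) ^+ 2 * 3^-1 * C2 * S * V = 4 / 3 * C2 * S * V by rewrite expr2; field.
exact: k2.
Qed.

Section Meas.
Context {d : measure_display} {Omega : measurableType d} {R : realType}
  (P : probability Omega R).

Definition integ (f : Omega -> R) := P.-integrable setT (EFin \o f).

Lemma bnd_integ (f : Omega -> R) (M : R) : measurable_fun setT f ->
  (forall w, `|f w| <= M) -> integ f.
Proof.
move=> mf fM; apply: (le_integrable measurableT _ _ (finite_measure_integrable_cst P M measurableT)).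
  exact/measurable_EFinP.
move=> w _ /=; rewrite lee_fin; apply: le_trans (fM w) _; exact: ler_norm.
Qed.

Lemma dom_integ (f g : Omega -> R) : measurable_fun setT f ->
  (forall w, `|f w| <= `|g w|) -> integ g -> integ f.
Proof.
move=> mf fg ig; apply: (le_integrable measurableT _ _ ig); first exact/measurable_EFinP.
by move=> w _ /=; rewrite lee_fin.
Qed.

Lemma integD (f g : Omega -> R) : integ f -> integ g -> integ (fun w => f w + g w).
Proof. by move=> hf hg; exact: (integrableD measurableT hf hg). Qed.

Lemma integZ (k : R) (f : Omega -> R) : integ f -> integ (fun w => k * f w).
Proof.
move=> hf; apply: (eq_integrable measurableT _ _ _ (integrableZl measurableT k hf)).
by move=> w _ /=; rewrite EFinM.
Qed.

Lemma ExD (f g : Omega -> R) : integ f -> integ g ->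
  Ex P (fun w => f w + g w) = Ex P f + Ex P g.
Proof. by move=> hf hg; exact: (RintegralD measurableT hf hg). Qed.

Lemma ExZ (k : R) (f : Omega -> R) : integ f -> Ex P (fun w => k * f w) = k * Ex P f.
Proof. by move=> hf; exact: (RintegralZl k measurableT hf). Qed.

Lemma Ex_le (f g : Omega -> R) : integ f -> integ g -> (forall w, f w <= g w) ->
  Ex P f <= Ex P g.
Proof. by move=> hf hg fg; exact: (le_Rintegral measurableT hf hg). Qed.

Lemma Ex_ge0 (f : Omega -> R) : (forall w, 0 <= f w) -> 0 <= Ex P f.
Proof. by move=> h; exact: Rintegral_ge0. Qed.

Lemma Ex_norm (f : Omega -> R) : integ f -> `|Ex P f| <= Ex P (fun w => `|f w|).
Proof. by move=> hf; exact: (le_normr_Rintegral measurableT hf). Qed.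

Lemma Ex_ext (f g : Omega -> R) : (forall w, f w = g w) -> Ex P f = Ex P g.
Proof. by move=> h; congr Ex; apply/funext. Qed.
Lemma integB (f g : Omega -> R) : integ f -> integ g -> integ (fun w => f w - g w).
Proof.
move=> hf hg; have := integD _ _ hf (integZ (-1) _ hg).
by apply: eq_integrable => // w _ /=; rewrite mulN1r.
Qed.
End Meas.

Theorem propositionA3 (d d' : measure_display) (Omega : measurableType d)
  (Xt : measurableType d') (R : realType) (P : probability Omega R)
  (X : Omega -> Xt) (Y : Omega -> R)
  (H : set (Xt -> R)) (W : set (Xt -> R -> R)) (FT FT1 : Xt -> R) :
  measurable_fun setT X ->
  measurable_fun setT Y ->
  (forall w, Y w = 0 \/ Y w = 1) ->
  (forall h, H h -> measurable_fun setT h /\ forall x, h x = 0 \/ h x = 1) ->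
  measurable_fun setT FT -> measurable_fun setT FT1 ->
  P.-integrable setT (fun w => (FT (X w))%:E) ->
  P.-integrable setT (fun w => (FT1 (X w))%:E) ->
  P.-integrable setT (fun w => ((FT1 (X w) - FT (X w)) ^+ 2)%:E) ->
  (forall h g, H h -> interval_membership g ->
     W (fun x v => h x * g v)) ->
  has_ubound (CT2_ratios P X H (fun x => sigmoid (FT x))) ->
  let fT := fun x => sigmoid (FT x) in
  let epsT := Ex P (fun w => logloss (FT1 (X w)) (Y w)) - fine (Lstar P X Y W FT) in
  let CT := Num.sqrt (sup (CT2_ratios P X H fT)) in
  multicalibrated P X Y H fT
    (2 / Num.sqrt 3 * CT *
       Num.sqrt (2 * Ex P (fun w => `|FT1 (X w) - FT (X w)|)
                 + 1 / 8 * Ex P (fun w => (FT1 (X w) - FT (X w)) ^+ 2)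
                 + epsT)).
Proof.
move=> mX mY hY hH mFT mFT1 iF0 iF1 iD2 hW hub fT epsT CT h g Hh Hg.
rewrite /CT /epsT /fT.
have [mh h01] := hH h Hh.
have g01 : forall v, g v = 0 \/ g v = 1.
  by case: Hg => I [_ gI] v; rewrite gI; case: (v \in I); [right|left].
pose F0 := fun w => FT (X w).
pose F1 := fun w => FT1 (X w).
pose f := fun w => sigmoid (F0 w).
pose z := fun w => h (X w) * g (f w).
have z01 : forall w, z w = 0 \/ z w = 1.
  by move=> w; rewrite /z; case: (h01 (X w)) => ->; case: (g01 (f w)) => ->;
    rewrite ?mul0r ?mul1r; auto.
have mF0 : measurable_fun setT F0 := measurableT_comp mFT mX.
have mF1 : measurable_fun setT F1 := measurableT_comp mFT1 mX.
have msig : measurable_fun setT (@sigmoid R) := continuous_measurable_fun (@sigmoid_continuous R).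
have msp : measurable_fun setT (@sp R) := continuous_measurable_fun (@sp_continuous R).
have mf : measurable_fun setT f := measurableT_comp msig mF0.
have mhX : measurable_fun setT (fun w => h (X w)) := measurableT_comp mh mX.
have mg : measurable_fun setT g.
  case: Hg => I [_ gI].
  have -> : g = \1_[set` I].
    apply/funext => v; rewrite gI indicE.
    case: (boolP (v \in I)) => vI; first by rewrite mem_set.
    by rewrite memNset //= ; apply/negP.

  exact: measurable_indic (measurable_itv I).
have mz : measurable_fun setT z := measurable_funM mhX (measurableT_comp mg mf).
have mL : forall G, measurable_fun setT G -> measurable_fun setT (fun w => logloss (G w) (Y w)).
  move=> G mG.
  have -> : (fun w => logloss (G w) (Y w)) = (fun w => Y w * @sp R (- G w) + (1 - Y w) * @sp R (G w)).
    by apply/funext => w; rewrite logloss_sp.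
  apply: measurable_funD; apply: measurable_funM.
  - exact: mY.
  - exact: measurableT_comp msp (measurable_funN mG).
  - exact: measurable_funB (measurable_cst _) mY.
  - exact: measurableT_comp msp mG.
have iabs : forall G, measurable_fun setT G -> integ P G -> integ P (fun w => `|G w|).
  move=> G mG iG; apply: (dom_integ P _ _ _ _ iG).
    exact: measurableT_comp (@normr_measurable _ _) mG.
  by move=> w; rewrite normr_id.
have icst : forall c : R, integ P (fun _ => c).
  by move=> c; apply: (bnd_integ P _ `|c|) => //; exact: measurable_cst.
have iL : forall G, measurable_fun setT G -> integ P G -> integ P (fun w => logloss (G w) (Y w)).
  move=> G mG iG; apply: (dom_integ P _ _ (mL G mG) _ (integD P _ _ (iabs G mG iG) (icst (ln 2)))).
  move=> w; apply: le_trans (logloss_abs _ _ (hY w)) _; exact: ler_norm.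
have hf01 : forall w, 0 < f w < 1 by move=> w; rewrite sigmoid_gt0 sigmoid_lt1.
have iF0' : integ P F0 := iF0.
have iF1' : integ P F1 := iF1.
have iz : integ P z.
  apply: (bnd_integ P _ 1 mz) => w; case: (z01 w) => ->; rewrite ?normr0 ?normr1 //.
have mA : measurable_fun setT (fun w => z w * (Y w - f w)).
  exact: measurable_funM mz (measurable_funB mY mf).
have YF1 : forall w, `|Y w - f w| <= 1.
  move=> w; have := hf01 w; case: (hY w) => -> /andP[a b].
    by rewrite sub0r normrN gtr0_norm // ltW.
  by rewrite ger0_norm ?subr_ge0 ?ltW //; lra.
have Az : forall w, `|z w * (Y w - f w)| <= z w.
  move=> w; rewrite normrM; case: (z01 w) => ->; rewrite ?normr0 ?mul0r ?normr1 ?mul1r //.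
have iA : integ P (fun w => z w * (Y w - f w)).
  apply: (bnd_integ P _ 1 mA) => w; apply: le_trans (Az w) _.
  by case: (z01 w) => ->.
apply: (@core_alg R _ (Ex P z) _ _ _ _ (Ex P (fun w => logloss (F0 w) (Y w)))).
- move=> t.
  pose G := fun w => F0 w + t * z w.
  have mG : measurable_fun setT G.
    exact: measurable_funD mF0 (measurable_funM (measurable_cst t) mz).
  have iG : integ P G := integD P _ _ iF0' (integZ P t _ iz).
  have iLG := iL G mG iG.
  have hLs : fine (Lstar P X Y W FT) <= Ex P (fun w => logloss (G w) (Y w)).
    have fI := integrable_fin_num measurableT iLG.
    have Lle : (Lstar P X Y W FT <= \int[P]_w (logloss (G w) (Y w))%:E)%E.
      apply: ereal_inf_lbound.
      exists 1%N, (fun _ => t), (fun _ => fun x v => h x * g v); split.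
        by move=> _; exact: hW.
      congr integral; apply/funext => w; rewrite big_ord1 //.
    have L0 : (0 <= Lstar P X Y W FT)%E.
      apply: le_ereal_inf_tmp => r [K [wt [phi [_ ->]]]].
      by apply: integral_ge0 => w _; rewrite lee_fin logloss_ge0.
    apply: fine_le => //.
    by rewrite ge0_fin_numE // (le_lt_trans Lle) // ltey_eq fI.
  have iQ : integ P (fun w => logloss (F0 w) (Y w) + ((- t) * (z w * (Y w - f w)) + (t ^+ 2 / 8) * z w)).
    exact: integD P _ _ (iL F0 mF0 iF0') (integD P _ _ (integZ P _ _ iA) (integZ P _ _ iz)).
  have hup : Ex P (fun w => logloss (G w) (Y w)) <=
      Ex P (fun w => logloss (F0 w) (Y w) + ((- t) * (z w * (Y w - f w)) + (t ^+ 2 / 8) * z w)).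
    apply: (Ex_le P _ _ iLG iQ) => w.
    have := logloss_quad (F0 w) t (z w) (Y w) (hY w) (z01 w).
    rewrite /G /f; lra.
  rewrite (ExD P _ _ (iL F0 mF0 iF0') (integD P _ _ (integZ P _ _ iA) (integZ P _ _ iz))) in hup.
  rewrite (ExD P _ _ (integZ P _ _ iA) (integZ P _ _ iz)) (ExZ P _ _ iA) (ExZ P _ _ iz) in hup.
  have e : Ex P (fun w => z w * (Y w - f w)) =
     Ex P (fun w => h (X w) * g (sigmoid (FT (X w))) * (Y w - sigmoid (FT (X w)))) by [].
  rewrite e in hup.
  lra.
- have iD1 : integ P (fun w => `|F1 w - F0 w|).
    exact: (iabs _ (measurable_funB mF1 mF0) (integB P _ _ iF1' iF0')).
  have iL1 := iL F1 mF1 iF1'.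
  rewrite -(ExD P _ _ iL1 iD1).
  apply: (Ex_le P _ _ (iL F0 mF0 iF0') (integD P _ _ iL1 iD1)) => w.
  by rewrite distrC; exact: logloss_lip (hY w).
- apply: le_trans (Ex_norm P _ iA) _.
  exact: (Ex_le P _ _ (iabs _ mA iA) iz Az).
- move=> Zp.
  pose A := [set w | h (X w) = 1].
  have mAs : measurable A.
    have := mhX measurableT [set 1] (measurable_set1 (1:R)); rewrite setTI; exact.
  have hind : forall w, \1_A w = h (X w).
    move=> w; rewrite indicE; case: (h01 (X w)) => hw.
      by rewrite memNset // /A /= hw; lra.
    by rewrite mem_set.
  have iH : integ P (fun w => h (X w)).
    apply: (bnd_integ P _ 1 mhX) => w; case: (h01 (X w)) => ->; rewrite ?normr0 ?normr1 //.
  have PAE : fine (P A) = Ex P (fun w => h (X w)).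
    rewrite -(Ex_ext P _ _ hind) /Ex integral_indic // setIT //.
  have ZH : Ex P z <= Ex P (fun w => h (X w)).
    apply: (Ex_le P _ _ iz iH) => w; rewrite /z.
    by case: (h01 (X w)) => ->; case: (g01 (f w)) => ->; rewrite ?mul0r ?mul1r ?mulr0 ?mulr1.
  have finA : P A \is a fin_num := fin_num_measure P A mAs.
  have pA : 0 < fine (P A) by rewrite PAE; lra.
  have PApos : (0 < P A)%E by rewrite -(fineK finA) lte_fin.
  pose u := fun w => h (X w) * sigmoid (FT (X w)) * (1 - sigmoid (FT (X w))).
  have u0 : forall w, 0 <= u w.
    move=> w; rewrite /u -mulrA; apply: mulr_ge0; first by case: (h01 (X w)) => ->.
    by have := hf01 w; rewrite /f /F0 => /andP[a b]; apply: mulr_ge0; rewrite ?subr_ge0 ltW.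
  have mu' : measurable_fun setT u.
    apply: measurable_funM; first exact: measurable_funM mhX mf.
    exact: measurable_funB (measurable_cst _) mf.
  have iu : integ P u.
    apply: (bnd_integ P _ 1 mu') => w; rewrite ger0_norm //.
    rewrite /u; have := hf01 w; rewrite /f /F0 => /andP[a b].
    case: (h01 (X w)) => ->; rewrite ?mul0r // mul1r; nra.
  have Vpos : 0 < Ex P u.
    rewrite lt_def (Ex_ge0 P _ u0) andbT; apply/negP => /eqP V0.
    have fu := integrable_fin_num measurableT iu.
    have I0 : (\int[P]_w (u w)%:E = 0)%E.
      by rewrite -(fineK fu); move: V0; rewrite /Ex => ->.
    have : (\int[P]_w `|(EFin \o u) w| = 0)%E.
      by rewrite -I0; apply: eq_integral => w _ /=; rewrite ger0_norm.
    have mEu : measurable_fun setT (EFin \o u) by apply/measurable_EFinP.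
    move/(ae_eq_integral_abs P measurableT mEu).
    case=> N [mN PN sub].
    have : A `<=` N.
      move=> w Aw; apply: sub => /= hw.
      have := hw I; rewrite /u Aw mul1r => /eqP; rewrite eqe mulf_eq0 subr_eq0.
      have := hf01 w; rewrite /f /F0 => /andP[a b].
      by rewrite gt_eqF //= eq_sym lt_eqF.
    move/(subset_measure0 mAs mN)/(_ PN) => PA0.
    by move: PApos; rewrite PA0 ltxx.
  pose r := condEx P (fun w => g (sigmoid (FT (X w)))) A /
            condEx P (fun w => sigmoid (FT (X w)) * (1 - sigmoid (FT (X w)))) A.
  have rin : CT2_ratios P X H (fun x => sigmoid (FT x)) r.
    by exists h, g; split; [exact: Hh | split; [exact: Hg | split; [exact: PApos | by []]]].
  have rE : r = Ex P z / Ex P u.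
    rewrite /r /condEx.
    rewrite (Ex_ext P _ z); last by move=> w; rewrite /z mulrC; congr (_ * _); exact: hind.
    have eu : Ex P (fun w => sigmoid (FT (X w)) * (1 - sigmoid (FT (X w))) * \1_A w) = Ex P u.
      by apply: Ex_ext => w; rewrite /u -(hind w); ring.
    rewrite eu.
    field; rewrite ?gt_eqF //.
  have rs := ub_le_sup hub rin.
  have z0 : 0 <= Ex P z.
    by apply: Ex_ge0 => w; case: (z01 w) => ->.
  split.
    by rewrite -ler_pdivrMr // -rE.
  apply: le_trans rs; rewrite rE divr_ge0 // ltW //.
- by apply: Ex_ge0 => w; exact: normr_ge0.
- by apply: Ex_ge0 => w; exact: sqr_ge0.
- apply: Ex_ge0 => w; rewrite -mulrA; apply: mulr_ge0.
    by case: (h01 (X w)) => ->.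
  have := hf01 w; rewrite /f /F0 => /andP[a b]; apply: mulr_ge0; rewrite ?subr_ge0 ltW //.
Qed.
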